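(* The language $L\subseteq\{a,b\}^*$ given by the regular expression $(a(ab)^*b)^*$ is definable in $FO[<]$ but not in $FO^2[<,\mathrm{Inv}]$.
   Context: $FO[<]$ is first-order logic over finite words with the order $<$ on positions and unary predicates $a(x)$ (letter at position $x$ is $a$). $FO^2[<,\mathrm{Inv}]$ is its two-variable fragment extended by binary predicates $a(x,y)$ meaning $\exists z(x<z\wedge z<y\wedge a(z))$ (only two variables may be used in formulas). A language is definable in a logic if it is the set of words satisfying some sentence of that logic. *)

(* Defs.v *)
From mathcomp Require Import all_boot.
Set Implicit Arguments. Unset Strict Implicit. Unset Printing Implicit Defensive.

Inductive letter := La | Lb.

Definition word := seq letter.

Definition letter_at (w : word) (i : nat) : letter := nth La w i.

Inductive regex :=
| REps
| RSym of letter
| RCat of regex & regex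
| RUnion of regex & regex
| RStar of regex.

Inductive matches : regex -> word -> Prop :=
| m_eps : matches REps [::]
| m_sym c : matches (RSym c) [:: c]
| m_cat r s u v : matches r u -> matches s v -> matches (RCat r s) (u ++ v)
| m_unionl r s w : matches r w -> matches (RUnion r s) w
| m_unionr r s w : matches s w -> matches (RUnion r s) w
| m_star0 r : matches (RStar r) [::]
| m_starS r u v : matches r u -> matches (RStar r) v -> matches (RStar r) (u ++ v).

Definition L_regex : regex :=
  RStar (RCat (RCat (RSym La) (RStar (RCat (RSym La) (RSym Lb)))) (RSym Lb)).

Definition L : word -> Prop := matches L_regex.

Inductive fo :=
| FLt of nat & nat
| FEq of nat & nat
| FLetter of letter & nat
| FNot of fo
| FAnd of fo & fo
| FOr of fo & fo
| FEx of nat & fo.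

Definition upd (nu : nat -> nat) (x i : nat) : nat -> nat :=
  fun y => if y == x then i else nu y.

Fixpoint fo_sat (w : word) (nu : nat -> nat) (f : fo) : Prop :=
  match f with
  | FLt x y => nu x < nu y
  | FEq x y => nu x = nu y
  | FLetter c x => letter_at w (nu x) = c
  | FNot g => ~ fo_sat w nu g
  | FAnd g h => fo_sat w nu g /\ fo_sat w nu h
  | FOr g h => fo_sat w nu g \/ fo_sat w nu h
  | FEx x g => exists i, i < size w /\ fo_sat w (upd nu x i) g
  end.

Fixpoint fo_fv (f : fo) : seq nat :=
  match f with
  | FLt x y | FEq x y => [:: x; y]
  | FLetter _ x => [:: x]
  | FNot g => fo_fv g
  | FAnd g h | FOr g h => fo_fv g ++ fo_fv h
  | FEx x g => [seq y <- fo_fv g | y != x]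
  end.

Definition fo_sentence (f : fo) : Prop := fo_fv f = [::].

(** A language is FO[<]-definable if it is the set of words satisfying
    some FO[<] sentence (the assignment is irrelevant for sentences). *)
Definition FO_definable (K : word -> Prop) : Prop :=
  exists f, fo_sentence f /\ forall w, K w <-> fo_sat w (fun _ => 0) f.

Inductive fo2 :=
| GLt of bool & bool
| GEq of bool & bool
| GLetter of letter & bool
| GInv of letter & bool & bool     (* a(x,y) := exists z, x < z < y /\ a(z) *)
| GNot of fo2
| GAnd of fo2 & fo2
| GOr of fo2 & fo2
| GEx of bool & fo2.

Definition upd2 (nu : bool -> nat) (x : bool) (i : nat) : bool -> nat :=
  fun y => if y == x then i else nu y.

Fixpoint fo2_sat (w : word) (nu : bool -> nat) (f : fo2) : Prop :=
  match f with
  | GLt x y => nu x < nu y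
  | GEq x y => nu x = nu y
  | GLetter c x => letter_at w (nu x) = c
  | GInv c x y => exists z, nu x < z /\ z < nu y /\ z < size w /\ letter_at w z = c
  | GNot g => ~ fo2_sat w nu g
  | GAnd g h => fo2_sat w nu g /\ fo2_sat w nu h
  | GOr g h => fo2_sat w nu g \/ fo2_sat w nu h
  | GEx x g => exists i, i < size w /\ fo2_sat w (upd2 nu x i) g
  end.

Fixpoint fo2_fv (f : fo2) : seq bool :=
  match f with
  | GLt x y | GEq x y | GInv _ x y => [:: x; y]
  | GLetter _ x => [:: x]
  | GNot g => fo2_fv g
  | GAnd g h | GOr g h => fo2_fv g ++ fo2_fv h
  | GEx x g => [seq y <- fo2_fv g | y != x]
  end.

Definition fo2_sentence (f : fo2) : Prop := fo2_fv f = [::].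

Definition FO2Inv_definable (K : word -> Prop) : Prop :=
  exists f, fo2_sentence f /\ forall w, K w <-> fo2_sat w (fun _ => 0) f.

(* Main.v *)
Require Import Defs.
From mathcomp Require Import all_boot zify.
From Stdlib Require Import ZArith Lia Classical.
Set Implicit Arguments. Unset Strict Implicit. Unset Printing Implicit Defensive.

Definition step (s : nat) (c : letter) : option nat :=
  match s, c with
  | 0, La => Some 1 | 1, La => Some 2 | 1, Lb => Some 0 | 2, Lb => Some 1
  | _, _ => None end.

Fixpoint acc (s : nat) (w : word) : bool :=
  match w with
  | [::] => s == 0
  | c :: w' => if step s c is Some s' then acc s' w' else false
  end.

Definition AB := [:: La; Lb].
Definition abs j := flatten (nseq j AB).

Ltac invs := repeat match goal with H : matches (RSym _) _ |- _ => inversion H; subst; clear H end.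

Lemma ab_star w : matches (RStar (RCat (RSym La) (RSym Lb))) w -> exists j, w = abs j.
Proof.
move=> H; remember (RStar (RCat (RSym La) (RSym Lb))) as r eqn:E.
elim: H E => //; try (move=> *; discriminate).
- by move=> r0 _; exists 0.
- move=> r0 u v Hu _ Hv IH [E]; subst r0.
  case: (IH erefl) => j ->.
  inversion Hu; subst; invs. by exists j.+1.
Qed.

Lemma acc_abs j w : acc 1 (abs j ++ w) = acc 1 w.
Proof. by elim: j => //= j IH. Qed.

Lemma L_acc w : L w -> acc 0 w.
Proof.
rewrite /L => H; remember L_regex as r eqn:E.
elim: H E => //; try (move=> *; discriminate).
move=> r0 u v Hu _ Hv IH [E]; subst r0.
have := IH erefl => Hav.
inversion Hu; subst. match goal with H : matches (RCat _ _) _ |- _ => inversion H; subst end.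
invs. match goal with H : matches (RStar _) _ |- _ => case: (ab_star H) => j -> end.
by rewrite -!catA /= acc_abs.
Qed.

Lemma abs_match j : matches (RStar (RCat (RSym La) (RSym Lb))) (abs j).
Proof.
elim: j => [|j IH]; first exact: m_star0.
have -> : abs j.+1 = [:: La; Lb] ++ abs j by [].
apply: m_starS => //.
have -> : [:: La; Lb] = [:: La] ++ [:: Lb] by [].
apply: m_cat; exact: m_sym.
Qed.

Lemma L_cons j w : L w -> L (La :: abs j ++ Lb :: w).
Proof.
move=> H.
have -> : La :: abs j ++ Lb :: w = (([:: La] ++ abs j) ++ [:: Lb]) ++ w.
  by rewrite -!catA.
apply: m_starS => //.
apply: m_cat; last exact: m_sym.
apply: m_cat; [exact: m_sym | exact: abs_match].
Qed.

Lemma acc_L n w : size w <= n ->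
  (acc 0 w -> L w) /\ (acc 1 w -> exists j w', w = abs j ++ Lb :: w' /\ L w').
Proof.
elim: n w => [|n IH] [|c w] //=.
- move=> _; split => //; move=> _; exact: m_star0.
- move=> _; split => //; move=> _; exact: m_star0.
- move=> Hs; case: c => /=; split.
  + move=> H; have [_ H1] := IH w Hs.
    case: (H1 H) => j [w' [-> Hw']]; exact: L_cons.
  + case: w Hs => [|c w] //= Hs; case: c => //= H.
    have Hs' : size w <= n by lia.
    have [_ H1] := IH w Hs'.
    case: (H1 H) => j [w' [-> Hw']].
    by exists j.+1, w'.
  + by [].
  + move=> H; have [H0 _] := IH w Hs.
    by exists 0, w; split => //; apply: H0.
Qed.

Lemma L_acc_iff w : L w <-> acc 0 w.
Proof. split; [exact: L_acc | move=> H; exact: (proj1 (acc_L (leqnn _)) H)]. Qed.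

Open Scope Z_scope.
Definition eps (c : letter) : Z := if c is La then 1 else -1.
Fixpoint hgt (w : word) (t : nat) : Z :=
  match t with O => 0 | S t' => hgt w t' + eps (letter_at w t') end.

Lemma hgt_cons c w t : hgt (c :: w) t.+1 = eps c + hgt w t.
Proof. elim: t => [|t IH]; first by rewrite /= /letter_at /=; lia.
change (hgt (c :: w) t.+1 + eps (letter_at (c::w) t.+1) = eps c + (hgt w t + eps (letter_at w t)))%Z.
rewrite IH /letter_at /=. lia. Qed.

Lemma acc_hgt w s : (s <= 2)%nat ->
  (acc s w <-> (forall t, (t <= size w)%nat -> 0 <= Z.of_nat s + hgt w t <= 2)
               /\ Z.of_nat s + hgt w (size w) = 0).
Proof.
elim: w s => [|c w IH] s Hs.
- rewrite /=; split.
  + move/eqP => ->; split => // t; rewrite leqn0 => /eqP -> /=; lia.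
  + move=> [_ H]; apply/eqP; lia.
- have step_spec : forall s', step s c = Some s' -> Z.of_nat s' = Z.of_nat s + eps c /\ (s' <= 2)%nat.
    by move=> s'; case: s Hs => [|[|[|s]]] //; case: c => //= _ [<-]; lia.
  have step_none : step s c = None -> Z.of_nat s + eps c < 0 \/ Z.of_nat s + eps c > 2.
    by clear step_spec; case: s Hs => [|[|[|s]]] //; case: c => //= _ _; lia.
  change (acc s (c::w)) with (if step s c is Some s' then acc s' w else false).
  change (size (c :: w)) with (size w).+1.
  case E: (step s c) => [s'|].
  + have [Hs1 Hs2] := step_spec s' E.
    rewrite IH // Hs1; split.
    * move=> [H1 H2]; split; last by rewrite hgt_cons; lia.
      move=> [|t] Ht; first by simpl; lia.
      rewrite hgt_cons; have := H1 t Ht; lia.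
    * move=> [H1 H2]; split; last by rewrite hgt_cons in H2; lia.
      move=> t Ht; have := H1 t.+1 Ht; rewrite hgt_cons; lia.
  + split => //; move=> [H1 _].
    have := H1 1%nat erefl; rewrite hgt_cons /=; have := step_none E; lia.
Qed.

Definition Good w := (forall t, (t <= size w)%nat -> 0 <= hgt w t <= 2) /\ hgt w (size w) = 0.

Lemma L_Good w : L w <-> Good w.
Proof. rewrite L_acc_iff acc_hgt //; rewrite /Good; split; move=> [H1 H2]; split => // t Ht; have := H1 t Ht; lia. Qed.
Close Scope Z_scope.

Arguments letter_at : simpl never.

Section Pos.
Variable w : word.
Notation n := (size w).
Notation lt := (letter_at w).

Definition dbl x := x.+1 < n /\ lt x = lt x.+1.

Definition C :=
  (forall x, x < n -> (forall y, y < n -> ~ y < x) -> lt x = La) /\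
  (forall x, x < n -> (forall y, y < n -> ~ x < y) -> lt x = Lb) /\
  (forall x y, x < n -> y < n -> dbl x -> dbl y -> x < y ->
     (forall z, z < n -> x < z -> z < y -> ~ dbl z) -> lt x <> lt y) /\
  (forall x, x < n -> dbl x -> (forall z, z < n -> z < x -> ~ dbl z) -> lt x = La) /\
  (forall x, x < n -> dbl x -> (forall z, z < n -> x < z -> ~ dbl z) -> lt x = Lb).

Lemma hgt2 t : lt t <> lt t.+1 -> hgt w t.+2 = hgt w t.
Proof. rewrite /=. case: (lt t); case: (lt t.+1) => H /=; try (exfalso; exact: H erefl); lia. Qed.

Lemma alt s e : (forall t, s <= t -> t.+2 <= e -> lt t <> lt t.+1) ->
  forall d, s + d <= e -> hgt w (s + d) = if odd d then hgt w s.+1 else hgt w s.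
Proof.
move=> H.
have K : forall d, (s + d.+1 <= e -> hgt w (s + d) = if odd d then hgt w s.+1 else hgt w s)
   /\ (s + d.+1 <= e -> hgt w (s + d.+1) = if odd d.+1 then hgt w s.+1 else hgt w s).
  elim=> [|d [IH1 IH2]].
  - by split => _; rewrite ?addn0 ?addn1.
  - split => He; first by apply: IH2; lia.
    have -> : s + d.+2 = (s + d).+2 by lia.
    rewrite hgt2; last (apply: H; lia).
    rewrite IH1; last lia. by rewrite /= negbK.
move=> [|d] He; first by rewrite addn0.
by apply (proj2 (K d)).
Qed.

Lemma dbl_a x : Good w -> dbl x -> lt x = La ->
  hgt w x = 0%Z /\ hgt w x.+1 = 1%Z /\ hgt w x.+2 = 2%Z.
Proof.
move=> [HG _] [Hx Hl] Ha.
have h0 := HG x (ltnW (ltnW Hx)). have h2 := HG x.+2 Hx.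
move: h2 => /=; rewrite -Hl Ha /=; lia.
Qed.

Lemma dbl_b x : Good w -> dbl x -> lt x = Lb ->
  hgt w x = 2%Z /\ hgt w x.+1 = 1%Z /\ hgt w x.+2 = 0%Z.
Proof.
move=> [HG _] [Hx Hl] Ha.
have h0 := HG x (ltnW (ltnW Hx)). have h2 := HG x.+2 Hx.
move: h2 => /=; rewrite -Hl Ha /=; lia.
Qed.

Lemma Good_C : Good w -> C.
Proof.
move=> HG; have [HB HE] := HG.
split; [|split; [|split; [|split]]].
- move=> x Hx H.
  case: x Hx H => [|x] Hx H; last by case: (H 0) => //; lia.
  have := HB 1 Hx. rewrite /=. case: (lt 0) => //=; lia.
- move=> x Hx H.
  have Hn : x.+1 = n. by case: (ltngtP x.+1 n) => // [Hlt|]; [case: (H x.+1) | lia].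
  move: HE; rewrite -Hn /=. have := HB x (ltnW Hx). case: (lt x) => //=; lia.
- move=> x y Hx Hy Dx Dy Hxy Hz Heq.
  have Halt : forall t, x.+1 <= t -> t.+2 <= y.+1 -> lt t <> lt t.+1.
    move=> t H1 H2 Ht. apply: (Hz t); try lia. split => //. case: Dy; lia.
  have := alt Halt (d := y - x.+1). have -> : x.+1 + (y - x.+1) = y by lia.
  move=> /(_ ltac:(lia)) Hy'.
  case E: (lt x).
  + have [_ [h1 h2]] := dbl_a HG Dx E.
    have [h3 _] := dbl_a HG Dy (esym (etrans (esym E) Heq)).
    move: Hy'; rewrite h3; case: (odd _); lia.
  + have [_ [h1 h2]] := dbl_b HG Dx E.
    have [h3 _] := dbl_b HG Dy (esym (etrans (esym E) Heq)).
    move: Hy'; rewrite h3; case: (odd _); lia.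
- move=> x Hx Dx Hz.
  case E: (lt x) => //; exfalso.
  have Halt : forall t, 0 <= t -> t.+2 <= x.+1 -> lt t <> lt t.+1.
    move=> t _ H2 Ht. apply: (Hz t); try lia. split => //; case: Dx; lia.
  have := alt Halt (d := x) ltac:(lia). rewrite add0n.
  have [h _] := dbl_b HG Dx E. rewrite h /=. case: (lt 0); case: (odd x) => /=; lia.
- move=> x Hx Dx Hz.
  case E: (lt x) => //; exfalso.
  have Halt : forall t, x.+1 <= t -> t.+2 <= n -> lt t <> lt t.+1.
    move=> t H1 H2 Ht. apply: (Hz t); try lia. split => //.
  have Hn : x.+2 <= n by case: Dx.
  have := alt Halt (d := n - x.+1) ltac:(lia).
  have -> : x.+1 + (n - x.+1) = n by lia.
  have [_ [h1 h2]] := dbl_a HG Dx E. rewrite HE h1 h2. case: (odd _); lia.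
Qed.

Definition eqL (c d : letter) : bool :=
  match c, d with La, La | Lb, Lb => true | _, _ => false end.
Lemma eqLP c d : reflect (c = d) (eqL c d).
Proof. by case: c; case: d; constructor. Qed.

Fixpoint ld (t : nat) : option letter :=
  match t with
  | O => None
  | S t' => if (0 < t') && eqL (lt t'.-1) (lt t') then Some (lt t') else ld t'
  end.

Arguments ld : simpl never.
Lemma ld_S t : ld t.+2 = if eqL (lt t) (lt t.+1) then Some (lt t.+1) else ld t.+1.
Proof. by []. Qed.

Lemma ld_spec t : t <= n ->
  (ld t = None -> forall z, z.+2 <= t -> ~ dbl z) /\
  (forall c, ld t = Some c -> exists x, x.+2 <= t /\ dbl x /\ lt x = c /\
       forall z, x < z -> z.+2 <= t -> ~ dbl z).
Proof.
elim: t => [|t IH] Ht; first by split => // _ z.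
have [IH1 IH2] := IH (ltnW Ht).
case: t IH IH1 IH2 Ht => [|t] IH IH1 IH2 Ht.
- split => // _ z Hz; lia.
- rewrite ld_S. case: (eqLP (lt t) (lt t.+1)) => Heq /=.
  + split => // c [<-]. exists t; split => //; split; first by split => //.
    split => // z H1 H2; lia.
  + case E: (ld t.+1) => [c|].
    * split => // c' [<-]. have [x [H1 [H2 [H3 H4]]]] := IH2 c E.
      exists x; split; first lia. split => //; split => // z H5 H6 [H7 H8].
      case: (ltngtP z.+2 t.+2) => H9; [by apply: (H4 z) => //; lia | lia | ].
      have Ez : z = t by lia. subst z. by apply: Heq.
    * split => // _ z Hz [H7 H8].
      case: (ltngtP z.+2 t.+2) => H9; [by apply: (IH1 E z) => //; lia | lia | ].
      have Ez : z = t by lia. subst z. by apply: Heq.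
Qed.

Definition tab (c : letter) (l : option letter) : Z :=
  match c, l with
  | Lb, None | Lb, Some Lb => 0 | La, None | La, Some Lb => 1
  | Lb, Some La => 1 | La, Some La => 2 end.

Lemma C_Good : C -> Good w.
Proof.
move=> [C1 [C2 [C3 [C4 C5]]]].
have inv : forall t, 1 <= t <= n -> hgt w t = tab (lt t.-1) (ld t).
  elim=> [|t IH] // /andP [H1 H2].
  case: t IH H1 H2 => [|t] IH H1 H2.
  - rewrite /=. have -> : lt 0 = La by apply: C1 => // y _; lia.
    by [].
  - rewrite (_ : hgt w t.+2 = hgt w t.+1 + eps (lt t.+1))%Z // IH; last (apply/andP; split; lia).
    rewrite ld_S.
    case: (eqLP (lt t) (lt t.+1)) => Heq /=.
    + have Dt : dbl t by split.
      case E: (ld t.+1) => [c'|].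
      * have [x [K1 [K2 [K3 K4]]]] := (proj2 (ld_spec (ltnW H2))) c' E.
        have Hne : lt x <> lt t.
          have Kx : x.+1 < n by case: K2.
          apply: C3 => //; try lia.
          move=> z _ Z1 Z2. apply: K4; lia.
        rewrite -Heq. move: Hne; rewrite K3.
        by case: c' {E K3 K4}; case: (lt t).
      * have Ha : lt t = La.
          apply: C4 => //; first lia. move=> z _ Hz. apply: (proj1 (ld_spec (ltnW H2))) => //; lia.
        by rewrite -Heq Ha.
    + move: Heq. case: (ld t.+1); [case|]; case: (lt t); case: (lt t.+1) => //=.
have Hb : forall t, t <= n -> (0 <= hgt w t <= 2)%Z.
  move=> [|t] Ht; first by rewrite /=; lia.
  rewrite inv; last (apply/andP; split; lia).
  case: (lt _); case: (ld _) => [[]|] /=; lia.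
split => //.
case En: n => [|m]; first by [].
rewrite inv; last (apply/andP; split; lia).
have -> : lt m = Lb by apply: C2; lia.
case E: (ld m.+1) => [[]|] //.
have [x [K1 [K2 [K3 K4]]]] := (proj2 (ld_spec (leqnn n))) La (etrans (f_equal ld En) E).
rewrite -K3 C5 //. lia. move=> z _ Hz Dz; apply: (K4 z) => //. case: Dz; lia.
Qed.

End Pos.

Lemma L_C w : L w <-> C w.
Proof. rewrite L_Good; split; [exact: Good_C | exact: C_Good]. Qed.

Definition FForall x f := FNot (FEx x (FNot f)).
Definition FImp f g := FOr (FNot f) g.
Definition FSame x y := FOr (FAnd (FLetter La x) (FLetter La y)) (FAnd (FLetter Lb x) (FLetter Lb y)).
Definition FDbl x y z := FEx y (FAnd (FAnd (FLt x y) (FNot (FEx z (FAnd (FLt x z) (FLt z y))))) (FSame x y)).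

Arguments FDbl : simpl never.
Arguments FSame : simpl never.
Definition phi1 := FForall 0 (FImp (FNot (FEx 1 (FLt 1 0))) (FLetter La 0)).
Definition phi2 := FForall 0 (FImp (FNot (FEx 1 (FLt 0 1))) (FLetter Lb 0)).
Definition phi3 := FForall 0 (FForall 1 (FImp
  (FAnd (FDbl 0 3 4) (FAnd (FDbl 1 3 4) (FAnd (FLt 0 1)
     (FNot (FEx 2 (FAnd (FLt 0 2) (FAnd (FLt 2 1) (FDbl 2 3 4))))))))
  (FNot (FSame 0 1)))).
Definition phi4 := FForall 0 (FImp (FAnd (FDbl 0 3 4) (FNot (FEx 2 (FAnd (FLt 2 0) (FDbl 2 3 4))))) (FLetter La 0)).
Definition phi5 := FForall 0 (FImp (FAnd (FDbl 0 3 4) (FNot (FEx 2 (FAnd (FLt 0 2) (FDbl 2 3 4))))) (FLetter Lb 0)).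
Definition phi := FAnd phi1 (FAnd phi2 (FAnd phi3 (FAnd phi4 phi5))).

Lemma phi_sentence : fo_sentence phi.
Proof. by vm_compute. Qed.

Section Sem.
Variable w : word.
Notation n := (size w).
Notation lt := (letter_at w).

Lemma sat_Forall nu x f : fo_sat w nu (FForall x f) <-> forall i, i < n -> fo_sat w (upd nu x i) f.
Proof.
rewrite /=; split.
- move=> H i Hi; apply: NNPP => Hn; apply: H; by exists i.
- move=> H [i [Hi Hn]]; apply: Hn; exact: H.
Qed.

Lemma sat_Imp nu f g : fo_sat w nu (FImp f g) <-> (fo_sat w nu f -> fo_sat w nu g).
Proof.
rewrite /=; split; first by case=> H1 H2 //.
move=> H; case: (classic (fo_sat w nu f)) => H'; [right; exact: H | by left].
Qed.

Lemma sat_Same nu x y : fo_sat w nu (FSame x y) <-> lt (nu x) = lt (nu y).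
Proof.
rewrite /FSame /=; case: (lt (nu x)); case: (lt (nu y)); split => //; intuition; discriminate.
Qed.

Lemma updE nu x i y : upd nu x i y = if y == x then i else nu y.
Proof. by []. Qed.

Lemma sat_Dbl nu x y z : x != y -> x != z -> y != z -> nu x < n ->
  fo_sat w nu (FDbl x y z) <-> dbl w (nu x).
Proof.
move=> Hxy Hxz Hyz Hx.
rewrite /FDbl /=.
have E1 : forall i, upd nu y i x = nu x by move=> i; rewrite updE (negbTE Hxy).
have E2 : forall i, upd nu y i y = i by move=> i; rewrite updE eqxx.
have E3 : forall i k, upd (upd nu y i) z k x = nu x by move=> i k; rewrite updE (negbTE Hxz) E1.
have E4 : forall i k, upd (upd nu y i) z k y = i by move=> i k; rewrite updE (negbTE Hyz) E2.
have E5 : forall i k, upd (upd nu y i) z k z = k by move=> i k; rewrite updE eqxx.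
split.
- move=> [i [Hi [[H1 H2] H3]]].
  move: H1 H2 H3; rewrite E1 E2 => H1 H2 H3.
  have Hs : i = (nu x).+1.
    case: (ltngtP i (nu x).+1) => // H; first lia.
    exfalso; apply: H2; exists (nu x).+1; split; first lia.
    rewrite E3 E4 E5; lia.
  subst i; split => //.
  by case: H3 => [[-> ->]|[-> ->]].
- move=> [H1 H2]; exists (nu x).+1; split => //; split.
  + rewrite E1 E2; split => //.
    move=> [k [Hk]]. rewrite E3 E4 E5. lia.
  + rewrite E1 E2 -H2; case: (lt (nu x)); [left|right]; done.
Qed.
End Sem.
Opaque FDbl FSame.

Section Sem2.
Variable w : word.
Notation n := (size w).
Notation lt := (letter_at w).

Lemma sat_phi1 nu : fo_sat w nu phi1 <->
  (forall x, x < n -> (forall y, y < n -> ~ y < x) -> lt x = La).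
Proof.
rewrite /phi1 sat_Forall; split.
- move=> H x Hx Hy; have := H x Hx; rewrite sat_Imp /= ?updE /=; apply.
  move=> [y [Hy1]]; rewrite ?updE /=. exact: Hy.
- move=> H x Hx; rewrite sat_Imp /= ?updE /= => Hn; apply: H => // y Hy Hyx.
  apply: Hn; exists y; rewrite ?updE /=; done.
Qed.

Lemma sat_phi2 nu : fo_sat w nu phi2 <->
  (forall x, x < n -> (forall y, y < n -> ~ x < y) -> lt x = Lb).
Proof.
rewrite /phi2 sat_Forall; split.
- move=> H x Hx Hy; have := H x Hx; rewrite sat_Imp /= ?updE /=; apply.
  move=> [y [Hy1]]; rewrite ?updE /=. exact: Hy.
- move=> H x Hx; rewrite sat_Imp /= ?updE /= => Hn; apply: H => // y Hy Hyx.
  apply: Hn; exists y; rewrite ?updE /=; done.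
Qed.

Lemma sat_And nu f g : fo_sat w nu (FAnd f g) <-> fo_sat w nu f /\ fo_sat w nu g.
Proof. by []. Qed.
Lemma sat_Not nu f : fo_sat w nu (FNot f) <-> ~ fo_sat w nu f.
Proof. by []. Qed.
Lemma sat_Ex nu x f : fo_sat w nu (FEx x f) <-> exists i, i < n /\ fo_sat w (upd nu x i) f.
Proof. by []. Qed.
Lemma sat_Lt nu x y : fo_sat w nu (FLt x y) <-> nu x < nu y.
Proof. by []. Qed.

Lemma sat_phi3 nu : fo_sat w nu phi3 <->
  (forall x y, x < n -> y < n -> dbl w x -> dbl w y -> x < y ->
     (forall z, z < n -> x < z -> z < y -> ~ dbl w z) -> lt x <> lt y).
Proof.
rewrite /phi3 sat_Forall; split.
- move=> H x y Hx Hy Dx Dy Hxy Hz.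
  have := H x Hx; rewrite sat_Forall => /(_ y Hy); rewrite sat_Imp => H'.
  have : ~ fo_sat w (upd (upd nu 0 x) 1 y) (FSame 0 1).
    apply: H'. rewrite !sat_And sat_Not sat_Ex sat_Lt ?updE /=.
    rewrite sat_Dbl ?updE //= sat_Dbl ?updE //=.
    split => //; split => //; split => //.
    move=> [k [Hk]]. move=> [H1 [H2 H3]]; move: H1 H2 H3; rewrite ?updE /= => H1 H2.
    rewrite sat_Dbl ?updE //= => H3. exact: (Hz k Hk H1 H2 H3).
  by rewrite sat_Same ?updE /=.
- move=> H x Hx; rewrite sat_Forall => y Hy; rewrite sat_Imp.
  rewrite !sat_And sat_Not sat_Ex sat_Lt sat_Dbl ?updE //= sat_Dbl ?updE //=.
  move=> [D1 [D2 [H1 H2]]]; rewrite ?sat_Not sat_Same ?updE /=.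
  apply: H => // z Hz Z1 Z2 Dz; apply: H2; exists z; split => //.
  rewrite ?sat_And ?sat_Lt ?updE /=; split => //; split => //.
  rewrite sat_Dbl ?updE //.
Qed.

Lemma sat_phi4 nu : fo_sat w nu phi4 <->
  (forall x, x < n -> dbl w x -> (forall z, z < n -> z < x -> ~ dbl w z) -> lt x = La).
Proof.
rewrite /phi4 sat_Forall; split.
- move=> H x Hx Dx Hz; have := H x Hx; rewrite sat_Imp.
  rewrite sat_And sat_Not sat_Ex sat_Dbl ?updE //=. apply; split => //.
  move=> [k [Hk]]; move=> [H1 H3]; move: H1 H3; rewrite ?updE /= => H1.
  rewrite sat_Dbl ?updE //= => H3. exact: (Hz k Hk H1 H3).
- move=> H x Hx; rewrite sat_Imp sat_And sat_Not sat_Ex sat_Dbl ?updE //= => [[D1 H2]].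
  apply: H => // z Hz Z1 Dz; apply: H2; exists z; split => //.
  rewrite ?sat_And ?sat_Lt ?updE /=; split => //. rewrite sat_Dbl ?updE //.
Qed.

Lemma sat_phi5 nu : fo_sat w nu phi5 <->
  (forall x, x < n -> dbl w x -> (forall z, z < n -> x < z -> ~ dbl w z) -> lt x = Lb).
Proof.
rewrite /phi5 sat_Forall; split.
- move=> H x Hx Dx Hz; have := H x Hx; rewrite sat_Imp.
  rewrite sat_And sat_Not sat_Ex sat_Dbl ?updE //=. apply; split => //.
  move=> [k [Hk]]; move=> [H1 H3]; move: H1 H3; rewrite ?updE /= => H1.
  rewrite sat_Dbl ?updE //= => H3. exact: (Hz k Hk H1 H3).
- move=> H x Hx; rewrite sat_Imp sat_And sat_Not sat_Ex sat_Dbl ?updE //= => [[D1 H2]].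
  apply: H => // z Hz Z1 Dz; apply: H2; exists z; split => //.
  rewrite ?sat_And ?sat_Lt ?updE /=; split => //. rewrite sat_Dbl ?updE //.
Qed.
End Sem2.

Lemma sat_phi w nu : fo_sat w nu phi <-> C w.
Proof.
rewrite /phi !sat_And.
by rewrite sat_phi1 sat_phi2 sat_phi3 sat_phi4 sat_phi5.
Qed.

Lemma FO_part : FO_definable L.
Proof.
exists phi; split; first exact: phi_sentence.
move=> w; rewrite L_C; symmetry; exact: sat_phi.
Qed.

Definition Inv (w : word) (c : letter) (x y : nat) :=
  exists z, x < z /\ z < y /\ z < size w /\ letter_at w z = c.

Definition atp (w1 w2 : word) (i j i' j' : nat) :=
  letter_at w1 i = letter_at w2 i' /\ letter_at w1 j = letter_at w2 j' /\
  (i < j <-> i' < j') /\ (j < i <-> j' < i') /\ (i = j <-> i' = j') /\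
  forall c, (Inv w1 c i j <-> Inv w2 c i' j') /\ (Inv w1 c j i <-> Inv w2 c j' i').

Lemma atp_sym w1 w2 i j i' j' : atp w1 w2 i j i' j' -> atp w1 w2 j i j' i'.
Proof.
move=> [h1 [h2 [h3 [h4 [h5 h6]]]]]; split; [exact h2|split; [exact h1|split; [exact h4|split; [exact h3|split]]]].
- split => E; apply/esym; apply h5; done.
- move=> c; case: (h6 c) => ? ?; done.
Qed.

Lemma atp_swap w1 w2 i j i' j' : atp w1 w2 i j i' j' -> atp w2 w1 i' j' i j.
Proof.
move=> [h1 [h2 [h3 [h4 [h5 h6]]]]]; split; [by symmetry|split; [by symmetry|split; [by symmetry|split; [by symmetry|split]]]]; try by symmetry.
move=> c; case: (h6 c) => ? ?; split; by symmetry.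
Qed.

Fixpoint depth (f : fo2) : nat :=
  match f with
  | GNot g => depth g
  | GAnd g h | GOr g h => maxn (depth g) (depth h)
  | GEx _ g => (depth g).+1
  | _ => 0
  end.

Lemma Inv_refl w c x : ~ Inv w c x x.
Proof. move=> [z [h1 [h2 _]]]; lia. Qed.

Section EF.
Variables w1 w2 : word.
Variable R : nat -> nat -> nat -> Prop.
Hypothesis Hmono : forall k i i', R k.+1 i i' -> R k i i'.
Hypothesis Hrange : forall k i i', R k i i' -> i < size w1 /\ i' < size w2.
Hypothesis Hforth : forall k j j' i, R k.+1 j j' -> i < size w1 ->
  exists i', R k i i' /\ atp w1 w2 i j i' j'.
Hypothesis Hback : forall k j j' i', R k.+1 j j' -> i' < size w2 ->
  exists i, R k i i' /\ atp w1 w2 i j i' j'.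

Definition Cf k (nu1 nu2 : bool -> nat) :=
  R k (nu1 true) (nu2 true) /\ R k (nu1 false) (nu2 false) /\
  atp w1 w2 (nu1 true) (nu1 false) (nu2 true) (nu2 false).

Lemma Cf_mono k nu1 nu2 : Cf k.+1 nu1 nu2 -> Cf k nu1 nu2.
Proof. by move=> [h1 [h2 h3]]; split; [|split]; try apply: Hmono. Qed.

Lemma Cf_le k k' nu1 nu2 : k <= k' -> Cf k' nu1 nu2 -> Cf k nu1 nu2.
Proof.
move=> H; have -> : k' = k + (k' - k) by lia.
elim: (k' - k) => [|d IH]; first by rewrite addn0.
rewrite addnS => HC; apply: IH; exact: Cf_mono.
Qed.

Lemma Cf_atom k nu1 nu2 : Cf k nu1 nu2 -> forall x y : bool,
  (nu1 x < nu1 y <-> nu2 x < nu2 y) /\ (nu1 x = nu1 y <-> nu2 x = nu2 y) /\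
  letter_at w1 (nu1 x) = letter_at w2 (nu2 x) /\
  forall c, (Inv w1 c (nu1 x) (nu1 y) <-> Inv w2 c (nu2 x) (nu2 y)).
Proof.
move=> [_ [_ A]] x y.
have As := atp_sym A.
have Hdiag : forall z : bool, (nu1 z < nu1 z <-> nu2 z < nu2 z) /\ (nu1 z = nu1 z <-> nu2 z = nu2 z)
  /\ forall c, (Inv w1 c (nu1 z) (nu1 z) <-> Inv w2 c (nu2 z) (nu2 z)).
  move=> z; split; first lia. split => //. move=> c; split => /Inv_refl //.
case: x; case: y; move: A As => [a1 [a2 [a3 [a4 [a5 a6]]]]] [b1 [b2 [b3 [b4 [b5 b6]]]]];
  try (have [d1 [d2 d3]] := Hdiag true); try (have [e1 [e2 e3]] := Hdiag false);
  (split; [done|split; [done|split; [done|]]]);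
  move=> c; try (exact: d3); try (exact: e3); [exact: (proj1 (a6 c)) | exact: (proj2 (a6 c))].
Qed.

Lemma upd2_same nu x i : upd2 nu x i x = i.
Proof. by rewrite /upd2 eqxx. Qed.
Lemma upd2_other nu x i : upd2 nu x i (~~ x) = nu (~~ x).
Proof. by rewrite /upd2; case: x. Qed.

Lemma EF_sound f : forall k nu1 nu2, depth f <= k -> Cf k nu1 nu2 ->
  (fo2_sat w1 nu1 f <-> fo2_sat w2 nu2 f).
Proof.
elim: f => [x y|x y|c x|c x y|g IH|g IHg h IHh|g IHg h IHh|x g IH] k nu1 nu2 Hd HC /=.
- by case: (Cf_atom HC x y).
- by case: (Cf_atom HC x y) => _ [].
- by case: (Cf_atom HC x x) => _ [_ [-> _]].
- by case: (Cf_atom HC x y) => _ [_ [_ H]]; apply: H.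
- by rewrite (IH k nu1 nu2).
- rewrite (IHg k nu1 nu2) ?(IHh k nu1 nu2) //=; move: Hd => /=; lia.
- rewrite (IHg k nu1 nu2) ?(IHh k nu1 nu2) //=; move: Hd => /=; lia.
- case: k Hd HC => [|k] Hd HC; first by [].
  have Hdk : depth g <= k by move: Hd => /=; lia.
  have [R1 [R2 A]] := HC.
  have Ry : R k.+1 (nu1 (~~ x)) (nu2 (~~ x)) by case: x {Hd Hdk}.
  have mk : forall i i', R k i i' -> atp w1 w2 i (nu1 (~~ x)) i' (nu2 (~~ x)) ->
      Cf k (upd2 nu1 x i) (upd2 nu2 x i').
    move=> i i' Ri Ai.
    have Ry' := Hmono Ry.
    case: x {Hd Hdk Ry Ry'} Ai (Hmono Ry) => Ai Ry';
      rewrite /Cf /upd2 /=; split => //; split => //; exact: atp_sym.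
  split.
  + move=> [i [Hi Hs]].
    have [i' [Ri Ai]] := Hforth Ry Hi.
    exists i'; split; first by case: (Hrange Ri).
    by rewrite -(IH k _ _ Hdk (mk _ _ Ri Ai)).
  + move=> [i' [Hi Hs]].
    have [i [Ri Ai]] := Hback Ry Hi.
    exists i; split; first by case: (Hrange Ri).
    by rewrite (IH k _ _ Hdk (mk _ _ Ri Ai)).
Qed.
End EF.

Arguments letter_at : simpl never.
Set Bullet Behavior "Strict Subproofs".

Definition weq (w1 : word) (j : nat) (w2 : word) (j' R : nat) :=
  (j < R \/ j' < R -> j = j') /\
  forall z z', z + j' = z' + j -> z <= j + R -> j <= z + R ->
    (z < size w1 <-> z' < size w2) /\ (z < size w1 -> letter_at w1 z = letter_at w2 z').

Lemma weq_sym w1 j w2 j' R : weq w1 j w2 j' R -> weq w2 j' w1 j R.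
Proof.
move=> [H1 H2]; split; first by move=> H; apply/esym; apply: H1; lia.
move=> z z' E Z1 Z2; have [K1 K2] := H2 z' z ltac:(lia) ltac:(lia) ltac:(lia).
split; first by symmetry. move=> Hz; symmetry; apply: K2; tauto.
Qed.

Lemma weq_shift w1 j w2 j' R i i' s r : weq w1 j w2 j' R -> i + j' = i' + j ->
  i <= j + s -> j <= i + s -> r + s <= R -> weq w1 i w2 i' r.
Proof.
move=> [H1 H2] E S1 S2 Hr; split.
- move=> H; have : j = j' by apply: H1; lia. lia.
- move=> z z' E' Z1 Z2; apply: H2; lia.
Qed.

Lemma weq_pt w1 j w2 j' R z z' : weq w1 j w2 j' R -> z + j' = z' + j -> z <= j + R -> j <= z + R ->
  (z < size w1 <-> z' < size w2) /\ (z < size w1 -> letter_at w1 z = letter_at w2 z').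
Proof. by move=> [_ H]; apply: H. Qed.

Lemma weq_trans w1 a w2 b w3 c R : weq w1 a w2 b R -> weq w2 b w3 c R -> weq w1 a w3 c R.
Proof.
move=> [A1 A2] [B1 B2]; split.
- move=> H; case: (ltnP a R) => Ha.
  + have Eab := A1 (or_introl Ha). have Ebc : b = c by apply: B1; left; lia. lia.
  + have Hc : c < R by lia. have Ebc := B1 (or_intror Hc).
    have Eab : a = b by apply: A1; right; lia. lia.
- move=> z z'' E Z1 Z2.
  have Hex : b <= z + b - a + 0 + R /\ z + b >= a.
    case: (ltnP a R) => Ha; first (have := A1 (or_introl Ha); lia).
    case: (ltnP b R) => Hb; first (have := A1 (or_intror Hb); lia). lia.
  set z' := z + b - a.
  have [P1 P2] := A2 z z' ltac:(lia) Z1 Z2.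
  have [Q1 Q2] := B2 z' z'' ltac:(lia) ltac:(lia) ltac:(lia).
  split; first by rewrite P1 Q1.
  move=> Hz; rewrite P2 // Q2 //; by apply/P1.
Qed.

Definition Notrip (w : word) := forall t, t.+2 < size w ->
  ~ (letter_at w t = letter_at w t.+1 /\ letter_at w t.+1 = letter_at w t.+2).

Lemma far_Inv w c x y : Notrip w -> x + 4 <= y -> y <= size w -> Inv w c x y.
Proof.
move=> H Hxy Hy.
have := H x.+1 ltac:(lia).
case E1: (letter_at w x.+1) => [|]; case E2: (letter_at w x.+2) => [|];
  case E3: (letter_at w x.+3) => [|] => Hn;
  try (exfalso; apply: Hn; split; congruence);
  case: c;
  first [ by exists x.+1; rewrite E1; repeat split; lia
        | by exists x.+2; rewrite E2; repeat split; lia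
        | by exists x.+3; rewrite E3; repeat split; lia ].
Qed.

Lemma atp_far w1 w2 i j i' j' : Notrip w1 -> Notrip w2 ->
  i < size w1 -> j < size w1 -> i' < size w2 -> j' < size w2 ->
  letter_at w1 i = letter_at w2 i' -> letter_at w1 j = letter_at w2 j' ->
  (i + 4 <= j /\ i' + 4 <= j') \/ (j + 4 <= i /\ j' + 4 <= i') ->
  atp w1 w2 i j i' j'.
Proof.
move=> N1 N2 Hi Hj Hi' Hj' L1 L2 H.
have NI : forall w c x y, y <= x -> ~ Inv w c x y by move=> w c x y Hxy [z [? [? _]]]; lia.
split => //; split => //; split; first lia; split; first lia; split; first lia.
move=> c; case: H => [[H1 H2]|[H1 H2]]; split.
- split => _; apply: far_Inv => //; lia.
- split => /NI; lia.
- split => /NI; lia.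
- split => _; apply: far_Inv => //; lia.
Qed.

Lemma Inv_weq w1 j w2 j' R c x y x' y' : weq w1 j w2 j' R -> x + j' = x' + j -> y + j' = y' + j ->
  x <= j + R -> j <= x + R -> y <= j + R -> j <= y + R -> (Inv w1 c x y -> Inv w2 c x' y').
Proof.
move=> W Ex Ey X1 X2 Y1 Y2 [z [Z1 [Z2 [Z3 Z4]]]].
have [P1 P2] := weq_pt (z := z) (z' := z + j' - j) W ltac:(lia) ltac:(lia) ltac:(lia).
exists (z + j' - j); split; first lia; split; first lia; split; first by apply/P1.
by rewrite -P2.
Qed.

Lemma Inv_weq_iff w1 j w2 j' R c x y x' y' : weq w1 j w2 j' R -> x + j' = x' + j -> y + j' = y' + j ->
  x <= j + R -> j <= x + R -> y <= j + R -> j <= y + R -> (Inv w1 c x y <-> Inv w2 c x' y').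
Proof.
move=> W Ex Ey X1 X2 Y1 Y2; split; first exact: Inv_weq W Ex Ey X1 X2 Y1 Y2.
have [A _] := W.
apply: (Inv_weq (weq_sym W)); lia.
Qed.

Section Forth.
Variables w1 w2 : word.
Notation n1 := (size w1).
Notation n2 := (size w2).
Variables (K Dl Lam E rmax : nat).
Definition rr k := 6 * k.+1.
Definition DD k := Dl * k.+1.
Hypothesis c1 : Lam + 10 <= Dl.
Hypothesis c2 : DD K + rr K + Lam + 10 <= E.
Hypothesis c3 : 3 * E <= n1.
Hypothesis c3' : 3 * E <= n2.
Hypothesis c4 : rr K <= rmax.
Hypothesis Hpre : forall t, t < E -> letter_at w1 t = letter_at w2 t.
Hypothesis Hsuf : forall t, t < E -> letter_at w1 (n1 - t.+1) = letter_at w2 (n2 - t.+1).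
Hypothesis N1 : Notrip w1.
Hypothesis N2 : Notrip w2.
Hypothesis Havail : forall rho i lo, rho <= rmax -> rho <= i -> i + rho < n1 -> rho <= lo ->
  lo + Lam + rho < n2 -> exists i', lo <= i' <= lo + Lam /\ weq w1 i w2 i' rho.

Definition RR k i i' :=
  k <= K /\ i < n1 /\ i' < n2 /\ weq w1 i w2 i' (rr k) /\
  (i < DD k \/ i' < DD k -> i = i') /\ (n1 - i <= DD k \/ n2 - i' <= DD k -> n1 - i = n2 - i').

Lemma DD_S k : DD k.+1 = DD k + Dl.
Proof. rewrite /DD. lia. Qed.
Lemma rr_S k : rr k.+1 = rr k + 6.
Proof. rewrite /rr. lia. Qed.
Lemma DD_mono k : k <= K -> DD k <= DD K.
Proof. rewrite /DD => H. nia. Qed.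
Lemma rr_mono k : k <= K -> rr k <= rr K.
Proof. rewrite /rr => H. lia. Qed.
Lemma rr_DD k : rr k + 1 <= DD k.
Proof. rewrite /rr /DD. nia. Qed.

Lemma weq_pre i r : i + r < E -> i < n1 -> weq w1 i w2 i r.
Proof.
move=> H Hi; split => // z z' Ez Z1 Z2.
have -> : z' = z by lia.
split; [lia | move=> _; apply: Hpre; lia].
Qed.

Lemma weq_suf i i' r : n1 - i + r < E -> i < n1 -> n1 - i = n2 - i' -> i' < n2 -> r < i -> r < i' ->
  weq w1 i w2 i' r.
Proof.
move=> H Hi Ei Hi' Ri Ri'; split; first lia.
move=> z z' Ez Z1 Z2; split; first lia.
move=> Hz. have := Hsuf (t := n1 - z.+1) ltac:(lia).
have -> : n1 - (n1 - z.+1).+1 = z by lia.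
have -> : n2 - (n1 - z.+1).+1 = z' by lia.
done.
Qed.

Lemma RR_mono k i i' : RR k.+1 i i' -> RR k i i'.
Proof.
move=> [H0 [H1 [H2 [H3 [H4 H5]]]]].
rewrite /RR; split; first lia; split => //; split => //; split.
- apply: (weq_shift (s := 0) H3); rewrite ?rr_S; lia.
- rewrite DD_S in H4 H5; split => H; [apply: H4 | apply: H5]; lia.
Qed.

Lemma forth k j j' i : RR k.+1 j j' -> i < n1 -> exists i', RR k i i' /\ atp w1 w2 i j i' j'.
Proof.
move=> [HK [Hj [Hj' [W [Zs Ze]]]]] Hi.
rewrite DD_S in Zs Ze. rewrite rr_S in W.
have HDK := DD_mono (ltnW HK). have HrK := rr_mono (ltnW HK).
have HDK1 := DD_mono HK. rewrite DD_S in HDK1.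
have Hrd := rr_DD k.
have [W1 W2] := W.
have Lj : letter_at w1 j = letter_at w2 j'.
  by have [_ P] := weq_pt (z := j) (z' := j') W ltac:(lia) ltac:(lia) ltac:(lia); apply: P.
case: (boolP ((i <= j + 6) && (j <= i + 6))) => [/andP [C1 C2]|Cfar].
  { have Hij : j <= i + j' by case: (ltnP j (rr k + 6)) => H; [have := W1 (or_introl H); lia | lia].
  set i' := i + j' - j.
  have Ei : i + j' = i' + j by rewrite /i'; lia.
  have [P1 P2] := weq_pt (z := i) (z' := i') W Ei ltac:(lia) ltac:(lia).
  have Hi' : i' < n2 by apply/P1.
  exists i'; split.
  - rewrite /RR; split; first lia; split => //; split => //; split.
      by apply: (weq_shift (s := 6) W) => //; lia.
    split => H; [ have : j = j' by apply: Zs; lia | have : n1 - j = n2 - j' by apply: Ze; lia ]; lia.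
  - split; first by apply: P2.
    split => //; split; first lia; split; first lia; split; first lia.
    move=> c; split; refine (Inv_weq_iff c W _ _ _ _ _ _); lia. }
have Hfar : i + 7 <= j \/ j + 7 <= i by move: Cfar; rewrite negb_and -!ltnNge; lia.
case: (ltnP i (DD k)) => Hs.
  { have Ei : i < E by lia.
  exists i; split.
  - rewrite /RR; split; first lia; split => //; split; first lia; split.
      by apply: weq_pre; lia.
    split => // H; lia.
  - apply: atp_far => //; first lia; first by apply: Hpre.
    case: (ltnP j (DD k + Dl)) => Hj1.
      have := Zs (or_introl Hj1); lia.
    case: (ltnP j' (DD k + Dl)) => Hj2.
      have := Zs (or_intror Hj2); lia.
    lia. }
case: (leqP (n1 - i) (DD k)) => He.
  { set i' := n2 - (n1 - i).
  have Hi' : i' < n2 by rewrite /i'; lia.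
  have Li : letter_at w1 i = letter_at w2 i'.
    have := Hsuf (t := n1 - i.+1) ltac:(lia).
    have -> : n1 - (n1 - i.+1).+1 = i by lia.
    by have -> : n2 - (n1 - i.+1).+1 = i' by rewrite /i'; lia.
  exists i'; split.
  - rewrite /RR; split; first lia; split => //; split => //; split.
      apply: weq_suf => //; rewrite /i'; lia.
    split => H; rewrite /i'; lia.
  - apply: atp_far => //.
    case: (leqP (n1 - j) (DD k + Dl)) => Hj1.
      have := Ze (or_introl Hj1); rewrite /i'; lia.
    case: (leqP (n2 - j') (DD k + Dl)) => Hj2.
      have := Ze (or_intror Hj2); rewrite /i'; lia.
    rewrite /i'; lia. }
case: Hfar => Hfar.
-
  case: (boolP ((j < DD k + Dl) || (j' < DD k + Dl))) => [Hz|Hz].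
    { have Ejj : j = j' by apply: Zs; move: Hz => /orP; lia.
    exists i; split.
    + rewrite /RR; split; first lia; split => //; split; first lia; split.
        by apply: weq_pre; lia.
      split => // H; lia.
    + apply: atp_far => //; try lia. apply: Hpre; lia. }
  have [i' [/andP [I1 I2] Wi]] := Havail (rho := rr k) (i := i) (lo := DD k) ltac:(lia) ltac:(lia) ltac:(lia) ltac:(lia) ltac:(lia).
  have [P1 P2] := weq_pt (z := i) (z' := i') Wi ltac:(lia) ltac:(lia) ltac:(lia).
  exists i'; split.
  + rewrite /RR; split; first lia; split => //; split; first lia; split => //.
    split => H; lia.
  + apply: atp_far => //; first [lia | by apply: P2 | (move: Hz; rewrite negb_or -!leqNgt; lia)].
-
  case: (boolP ((n1 - j <= DD k + Dl) || (n2 - j' <= DD k + Dl))) => [Hz|Hz].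
    { have Ejj : n1 - j = n2 - j' by apply: Ze; move: Hz => /orP; lia.
    set i' := n2 - (n1 - i).
    have Hi' : i' < n2 by rewrite /i'; lia.
    have Li : letter_at w1 i = letter_at w2 i'.
      have := Hsuf (t := n1 - i.+1) ltac:(lia).
      have -> : n1 - (n1 - i.+1).+1 = i by lia.
      by have -> : n2 - (n1 - i.+1).+1 = i' by rewrite /i'; lia.
    exists i'; split.
    + rewrite /RR; split; first lia; split => //; split => //; split.
        apply: weq_suf => //; rewrite /i'; lia.
      split => H; rewrite /i'; lia.
    + apply: atp_far => //; rewrite /i'; lia. }
  have [i' [/andP [I1 I2] Wi]] := Havail (rho := rr k) (i := i) (lo := n2 - (DD k + Lam + 1))
     ltac:(lia) ltac:(lia) ltac:(lia) ltac:(lia) ltac:(lia).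
  have [P1 P2] := weq_pt (z := i) (z' := i') Wi ltac:(lia) ltac:(lia) ltac:(lia).
  exists i'; split.
  + rewrite /RR; split; first lia; split => //; split; first lia; split => //.
    split => H; lia.
  + apply: atp_far => //; first [lia | by apply: P2 | (move: Hz; rewrite negb_or -!ltnNge; lia)].
Qed.
End Forth.

Set Bullet Behavior "Strict Subproofs".

Lemma RR_swap w1 w2 K Dl k i i' : RR w1 w2 K Dl k i i' -> RR w2 w1 K Dl k i' i.
Proof.
move=> [H0 [H1 [H2 [H3 [H4 H5]]]]]; split => //; split => //; split => //; split.
- exact: weq_sym.
- split => H; [apply/esym; apply: H4; lia | apply/esym; apply: H5; lia].
Qed.

Section Final.
Variables w1 w2 : word.
Variables (K Dl Lam E rmax : nat).
Hypothesis c1 : Lam + 10 <= Dl.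
Hypothesis c2 : DD Dl K + rr K + Lam + 10 <= E.
Hypothesis c3 : 3 * E <= size w1.
Hypothesis c3' : 3 * E <= size w2.
Hypothesis c4 : rr K <= rmax.
Hypothesis Hpre : forall t, t < E -> letter_at w1 t = letter_at w2 t.
Hypothesis Hsuf : forall t, t < E -> letter_at w1 (size w1 - t.+1) = letter_at w2 (size w2 - t.+1).
Hypothesis N1 : Notrip w1.
Hypothesis N2 : Notrip w2.
Hypothesis Hav12 : forall rho i lo, rho <= rmax -> rho <= i -> i + rho < size w1 -> rho <= lo ->
  lo + Lam + rho < size w2 -> exists i', lo <= i' <= lo + Lam /\ weq w1 i w2 i' rho.
Hypothesis Hav21 : forall rho i lo, rho <= rmax -> rho <= i -> i + rho < size w2 -> rho <= lo ->
  lo + Lam + rho < size w1 -> exists i', lo <= i' <= lo + Lam /\ weq w2 i w1 i' rho.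

Lemma EF_final f : depth f <= K ->
  (fo2_sat w1 (fun _ => 0) f <-> fo2_sat w2 (fun _ => 0) f).
Proof.
move=> Hd.
have Hpre' : forall t, t < E -> letter_at w2 t = letter_at w1 t by move=> t Ht; symmetry; apply: Hpre.
have Hsuf' : forall t, t < E -> letter_at w2 (size w2 - t.+1) = letter_at w1 (size w1 - t.+1)
  by move=> t Ht; symmetry; apply: Hsuf.
apply: (@EF_sound w1 w2 (RR w1 w2 K Dl) _ _ _ _ f K) => //.
- move=> k i i'; exact: (RR_mono c1 c2 c3 c3' c4).
- by move=> k i i' [_ [? [? _]]].
- move=> k j j' i H Hi; exact: (forth c1 c2 c3 c3' c4 Hpre Hsuf N1 N2 Hav12 H Hi).
- move=> k j j' i' H Hi'.
  have [i [Ri Ai]] := forth c1 c2 c3' c3 c4 Hpre' Hsuf' N2 N1 Hav21 (RR_swap H) Hi'.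
  exists i; split; [exact: RR_swap | exact: atp_swap].
- have HDK : rr K + 1 <= DD Dl K by rewrite /rr /DD; nia.
  split; [|split].
  + split => //; split; first lia; split; first lia; split.
      apply: (weq_pre c1 c2 c3 c3' c4 Hpre); lia.
    split => // H; lia.
  + split => //; split; first lia; split; first lia; split.
      apply: (weq_pre c1 c2 c3 c3' c4 Hpre); lia.
    split => // H; lia.
  + split; first by apply: Hpre; lia.
    split; first by apply: Hpre; lia.
    split; first lia; split; first lia; split; first lia.
    by move=> c; split; split => /Inv_refl.
Qed.
End Final.

Set Bullet Behavior "Strict Subproofs".

Lemma size_abs j : size (abs j) = 2 * j.
Proof. elim: j => //= j IH; rewrite /abs /= in IH *; lia. Qed.

Lemma nth_abs j e : e < 2 * j -> nth La (abs j) e = if odd e then Lb else La.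
Proof.
elim: j e => [|j IH] e He; first lia.
case: e He => [|[|e]] He //=.
rewrite IH //=; last lia. by rewrite negbK.
Qed.

Section Words.
Variable N : nat.
Definition PP := 4 * N + 2.
Definition cnd e := (e == 0) || ((0 < e <= N.*2) && odd e) || ((N.*2.+2 <= e) && ~~ odd e).
Definition UU := La :: abs N ++ Lb :: abs N.

Lemma size_UU : size UU = PP.
Proof. by rewrite /UU /= size_cat /= !size_abs /PP; lia. Qed.

Lemma nth_UU e : e < PP -> nth La UU e = if cnd e then La else Lb.
Proof.
rewrite /PP /cnd => He.
case: e He => [|e] He //=.
rewrite nth_cat size_abs.
case: (ltnP e (2 * N)) => H1.
- rewrite nth_abs //. case: ifP => Ho; case: ifP => Hc //; lia.
- case Ef: (e - 2 * N) => [|f] /=.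
  + case: ifP => Hc //; lia.
  + rewrite nth_abs; last lia. case: ifP => Ho; case: ifP => Hc //; lia.
Qed.

Lemma modP x y : y < PP -> (x * PP + y) %% PP = y.
Proof. move=> H. by rewrite modnMDl modn_small. Qed.

Lemma modS t : (t.+1) %% PP = if (t %% PP).+1 == PP then 0 else (t %% PP).+1.
Proof.
have HP : 0 < PP by rewrite /PP; lia.
have Hd := divn_eq t PP. have Hl := ltn_pmod t HP.
set q := t %/ PP in Hd. set e := t %% PP in Hd Hl *.
rewrite {1}Hd. case: eqP => He.
- have -> : (q * PP + e).+1 = q.+1 * PP + 0 by rewrite mulSn; lia.
  by rewrite modP.
- rewrite (_ : (q * PP + e).+1 = q * PP + e.+1); last lia.
  rewrite modP //; lia.
Qed.

Variable M : nat.
Definition uu := flatten (nseq M UU).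
Definition Lu t := if cnd (t %% PP) then La else Lb.

Lemma size_uu : size uu = M * PP.
Proof. rewrite /uu. elim: M => // k IH.
have -> : flatten (nseq k.+1 UU) = UU ++ flatten (nseq k UU) by [].
by rewrite size_cat IH size_UU mulSn. Qed.

Lemma nth_uu t : t < M * PP -> letter_at uu t = Lu t.
Proof.
rewrite /letter_at /uu /Lu. elim: M t => [|k IH] t Ht; first lia.
have -> : flatten (nseq k.+1 UU) = UU ++ flatten (nseq k UU) by [].
rewrite nth_cat size_UU.
case: (ltnP t PP) => H.
- by rewrite nth_UU // modn_small.
- rewrite IH; last by move: Ht; rewrite mulSn; lia.
  have -> : t %% PP = (t - PP) %% PP by rewrite -{1}(subnK H) modnDr.
  done.
Qed.

Lemma Lu_res t x y : t = x * PP + y -> y < PP -> Lu t = if cnd y then La else Lb.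
Proof. by move=> -> H; rewrite /Lu modP. Qed.

Lemma Notrip_uu : Notrip uu.
Proof.
move=> t Ht. rewrite size_uu in Ht.
rewrite !nth_uu; try lia.
rewrite /Lu !modS.
have HP : 0 < PP by rewrite /PP; lia.
have Hl := ltn_pmod t HP.
move: (t %% PP) Hl => e Hl.
have Lif : forall a b : bool, ((if a then La else Lb) = (if b then La else Lb)) <-> a = b.
  by case; case.
rewrite !Lif.
case: (e.+1 =P PP) => H1 /=.
- case: (1 =P PP) => H2 /=; rewrite /cnd /PP in H1 H2 *; lia.
- case: (e.+2 =P PP) => H2 /=; rewrite /cnd /PP in H1 H2 *; lia.
Qed.
End Words.

Lemma Lif (a b : bool) : ((if a then La else Lb) = (if b then La else Lb)) <-> a = b.
Proof. by case: a; case: b. Qed.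

Lemma avail_u N M rho i lo : rho <= i -> i + rho < size (uu N M) -> rho <= lo ->
  lo + PP N + rho <= size (uu N M) ->
  exists t, lo <= t < lo + PP N /\ weq (uu N M) i (uu N M) t rho.
Proof.
move=> H1 H2 H3 H4.
have HP : 0 < PP N by rewrite /PP; lia.
have Hd := divn_eq lo (PP N). have Hl := ltn_pmod lo HP.
have Hl' := ltn_pmod i HP.
set q := lo %/ PP N in Hd. set e := lo %% PP N in Hd Hl. set e' := i %% PP N in Hl'.
set t := if e <= e' then q * PP N + e' else q.+1 * PP N + e'.
have Ht : t %% PP N = e' by rewrite /t; case: ifP => _; rewrite modP.
have Htr : lo <= t < lo + PP N by rewrite /t; case: ifP => He; rewrite ?mulSn; lia.
exists t; split => //.
rewrite size_uu in H2 H4.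
split; first lia.
move=> z z' Ez Z1 Z2.
split; first by rewrite size_uu; lia.
move=> Hz; rewrite !nth_uu; try lia.
rewrite /Lu.
have -> : z %% PP N = z' %% PP N; last done.
have H : (z + t) %% PP N = (z' + i) %% PP N by rewrite Ez.
move: H; rewrite -modnDmr Ht /e' modnDmr => /eqP; rewrite eqn_modDr => /eqP //.
Qed.

Lemma L_abs_cat j w : L w -> L (abs j ++ w).
Proof.
elim: j => // j IH Hw.
have -> : abs j.+1 ++ w = La :: abs 0 ++ Lb :: (abs j ++ w) by [].
apply: L_cons; exact: IH.
Qed.

Lemma L_uu N M : L (uu N M).
Proof.
rewrite /uu; elim: M => [|k IH]; first exact: m_star0.
have -> : flatten (nseq k.+1 (UU N)) = La :: abs N ++ Lb :: (abs N ++ flatten (nseq k (UU N))).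
  by rewrite /= /UU /= -catA.
apply: L_cons; exact: L_abs_cat.
Qed.

Lemma hgt_par w t : exists z, hgt w t = (Z.of_nat t - 2 * z)%Z.
Proof.
elim: t => [|t [z IH]]; first by exists 0%Z.
have -> : hgt w t.+1 = (hgt w t + eps (letter_at w t))%Z by [].
rewrite IH. case: (letter_at w t); [exists z | exists (z+1)%Z]; rewrite /eps; lia.
Qed.

Lemma L_even w : L w -> ~~ odd (size w).
Proof.
move/L_Good => [_ H]. have [z Hz] := hgt_par w (size w).
rewrite Hz in H. apply/negP => Ho.
have [k Hk] : exists k, size w = k.*2.+1.
  exists (size w)./2. by rewrite -{1}(odd_double_half (size w)) Ho add1n.
rewrite Hk in H. lia.
Qed.

Set Bullet Behavior "Strict Subproofs".

Section Conc.
Variables m c rmax : nat.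
Hypothesis Hm : rmax < m.
Definition NN := 2 * m.
Definition PN := PP NN.
Definition uw := uu NN (2 * c + 2).
Definition pp := c * PN + 3 * NN + 2.
Definition q0 := c.+1 * PN.
Definition vw := take pp uw ++ La :: drop pp uw.

Lemma PN_eq : PN = 8 * m + 2.
Proof. rewrite /PN /PP /NN; lia. Qed.

Lemma size_uw : size uw = (2 * c + 2) * PN.
Proof. by rewrite /uw size_uu. Qed.

Lemma pp_lt : pp.+1 < size uw.
Proof. rewrite size_uw /pp /NN PN_eq. nia. Qed.

Lemma size_vw : size vw = (size uw).+1.
Proof.
have H := pp_lt.
rewrite /vw size_cat /= size_take size_drop.
have -> : (pp < size uw) = true by apply/idP; lia.
lia.
Qed.

Lemma v_lt t : t < pp -> letter_at vw t = letter_at uw t.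
Proof.
move=> Ht; have H := pp_lt.
rewrite /letter_at /vw nth_cat size_take.
have -> : (pp < size uw) = true by apply/idP; lia.
rewrite Ht nth_take //.
Qed.

Lemma v_gt t : pp < t -> letter_at vw t = letter_at uw t.-1.
Proof.
move=> Ht; have H := pp_lt.
rewrite /letter_at /vw nth_cat size_take.
have -> : (pp < size uw) = true by apply/idP; lia.
have -> : (t < pp) = false by apply/negbTE; lia.
have -> : t - pp = (t - pp - 1).+1 by lia.
rewrite /= nth_drop. congr nth; lia.
Qed.

Lemma v_pp : letter_at vw pp = La.
Proof.
have H := pp_lt.
rewrite /letter_at /vw nth_cat size_take.
have -> : (pp < size uw) = true by apply/idP; lia.
by rewrite ltnn subnn.
Qed.

Lemma u_res t x y : t = x * PN + y -> y < PN -> t < size uw -> letter_at uw t = if cnd NN y then La else Lb.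
Proof. move=> E Hy Ht. rewrite /uw nth_uu; last by rewrite size_uw in Ht. exact: Lu_res E Hy. Qed.

Lemma u_pp : letter_at uw pp = La.
Proof.
have H := pp_lt.
rewrite (u_res (x := c) (y := 3 * NN + 2)); [| rewrite /pp; lia | rewrite PN_eq /NN; lia | lia].
rewrite /cnd /NN. case: ifP => // Hc; lia.
Qed.

Lemma v_le t : t <= pp -> letter_at vw t = letter_at uw t.
Proof.
rewrite leq_eqVlt => /orP [/eqP ->|H]; [by rewrite v_pp u_pp | exact: v_lt].
Qed.

Lemma q0_pp : pp < q0.
Proof. rewrite /pp /q0 mulSn PN_eq /NN. lia. Qed.

Lemma align_r d : d <= NN -> letter_at vw (pp + d) = letter_at uw (q0 + d).
Proof.
move=> Hd; rewrite /NN in Hd; have H := pp_lt.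
have Hs : q0 + d < size uw by rewrite size_uw /q0 PN_eq /NN in Hd *; nia.
case: d Hd Hs => [|d] Hd Hs.
- rewrite addn0 v_pp (u_res (x := c.+1) (y := 0)); [done | rewrite /q0; lia | rewrite PN_eq; lia | lia].
- rewrite v_gt; last lia.
  rewrite (u_res (x := c) (y := 3 * NN + 2 + d)); [|rewrite /pp; lia|rewrite PN_eq /NN in Hd *; lia|have := q0_pp; lia].
  rewrite (u_res (x := c.+1) (y := d.+1)) //; try (rewrite PN_eq /NN; lia).
  apply/Lif. rewrite /cnd /NN; lia.
Qed.

Lemma align_l d : d <= NN -> letter_at vw (pp - d) = letter_at uw (q0 - d).
Proof.
move=> Hd; rewrite /NN in Hd; have H := pp_lt.
rewrite v_le; last lia.
have Hs : pp - d < size uw by lia.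
case: d Hd Hs => [|d] Hd Hs.
- rewrite !subn0 u_pp (u_res (x := c.+1) (y := 0)); [done | rewrite /q0; lia | rewrite PN_eq; lia |].
  rewrite size_uw /q0 PN_eq; nia.
- rewrite (u_res (x := c) (y := 3 * NN + 1 - d)); [|rewrite /pp /NN; lia|rewrite PN_eq /NN; lia|done].
  rewrite (u_res (x := c) (y := PN - d.+1)); [|rewrite /q0 mulSn; rewrite PN_eq /NN in Hd *; lia
     |rewrite PN_eq /NN; lia| rewrite size_uw /q0 PN_eq; nia].
  apply/Lif. rewrite PN_eq /cnd /NN; lia.
Qed.


Lemma align_any z : pp - NN <= z -> z <= pp + NN -> letter_at vw z = letter_at uw (z + q0 - pp).
Proof.
move=> H1 H2; have H := q0_pp.
case: (leqP pp z) => H3.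
- have := align_r (d := z - pp) ltac:(lia).
  have -> : pp + (z - pp) = z by lia.
  by have -> : q0 + (z - pp) = z + q0 - pp by lia.
- have := align_l (d := pp - z) ltac:(lia).
  have -> : pp - (pp - z) = z by lia.
  by have -> : q0 - (pp - z) = z + q0 - pp by lia.
Qed.

Lemma Notrip_vw : Notrip vw.
Proof.
move=> t Ht; rewrite size_vw in Ht.
have H := pp_lt. have Hq := q0_pp.
have Nu := @Notrip_uu NN (2 * c + 2). rewrite -/uw in Nu.
case: (leqP t.+2 pp) => H1.
  rewrite !v_le; try lia. apply: Nu; lia.
case: (ltnP pp t) => H2.
  rewrite !v_gt; try lia.
  have -> : t.+1.-1 = (t.-1).+1 by lia.
  have -> : t.+2.-1 = (t.-1).+2 by lia.
  apply: Nu; lia.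
have Hs : q0 + NN < size uw by rewrite size_uw /q0 PN_eq /NN; nia.
rewrite !align_any; try (rewrite /NN; lia).
have -> : t.+1 + q0 - pp = (t + q0 - pp).+1 by lia.
have -> : t.+2 + q0 - pp = (t + q0 - pp).+2 by lia.
apply: Nu; rewrite /NN in Hs; lia.
Qed.

Lemma weq_A t rho : t + rho <= pp -> weq uw t vw t rho.
Proof.
move=> H; have Hp := pp_lt; split => // z z' Ez Z1 Z2.
have -> : z' = z by lia.
rewrite size_vw; split; first lia.
move=> _; symmetry; apply: v_le; lia.
Qed.

Lemma weq_B s rho : pp + rho <= s -> rho <= s -> weq uw s vw s.+1 rho.
Proof.
move=> H1 H2; split; first lia.
move=> z z' Ez Z1 Z2.
have -> : z' = z.+1 by lia.
rewrite size_vw; split; first lia.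
move=> _; rewrite v_gt //; lia.
Qed.

Lemma weq_C i rho : rho <= i -> 2 * rho <= NN -> pp <= i + rho -> i <= pp + rho ->
  weq vw i uw (i + q0 - pp) rho.
Proof.
move=> H0 H1 H2 H3; have Hq := q0_pp; have Hp := pp_lt.
have Hs : q0 + NN < size uw by rewrite size_uw /q0 PN_eq /NN; nia.
split; first lia.
move=> z z' Ez Z1 Z2.
rewrite size_vw; split; first lia.
move=> _; rewrite align_any; try lia.
congr letter_at; lia.
Qed.

Definition Lam := 3 * PN.

Lemma Hav_uv rho i lo : rho <= rmax -> rho <= i -> i + rho < size uw -> rho <= lo ->
  lo + Lam + rho < size vw -> exists i', lo <= i' <= lo + Lam /\ weq uw i vw i' rho.
Proof.
move=> R0 R1 R2 R3 R4; rewrite size_vw /Lam in R4.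
have HP : 2 * rho + 2 <= PN by rewrite PN_eq; lia.
have Hp := pp_lt.
have Hsz : pp + PN + 2 * rho + 2 <= size uw by rewrite size_uw /pp /NN in Hp *; rewrite PN_eq in Hp HP *; nia.
case: (leqP (lo + PN + rho) pp) => HA.
- have [t [/andP [T1 T2] W]] := @avail_u NN (2 * c + 2) rho i lo R1 R2 R3 ltac:(rewrite -/uw -/PN; lia).
  move: T2; rewrite -/PN => T2.
  exists t; split; first (rewrite /Lam; apply/andP; split; lia).
  apply: (weq_trans W); apply: weq_A; lia.
- set lo' := maxn lo (pp + rho + 1).
  have [s [/andP [T1 T2] W]] := @avail_u NN (2 * c + 2) rho i (lo' - 1) R1 R2 ltac:(rewrite /lo'; lia)
     ltac:(rewrite -/uw -/PN /lo'; lia).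
  move: T2; rewrite -/PN => T2.
  exists s.+1; split; first (rewrite /Lam; apply/andP; split; rewrite /lo' in T1 T2; lia).
  apply: (weq_trans W); apply: weq_B; rewrite /lo' in T1; lia.
Qed.

Lemma Hav_vu rho i lo : rho <= rmax -> rho <= i -> i + rho < size vw -> rho <= lo ->
  lo + Lam + rho < size uw -> exists i', lo <= i' <= lo + Lam /\ weq vw i uw i' rho.
Proof.
move=> R0 R1 R2 R3 R4; rewrite size_vw in R2; rewrite /Lam in R4.
have HP : 2 * rho + 2 <= PN by rewrite PN_eq; lia.
have Hp := pp_lt. have Hq := q0_pp.
have Hqs : q0 + NN < size uw by rewrite size_uw /q0 PN_eq /NN; nia.
have [tau [W [T1 T2]]] : exists tau, weq vw i uw tau rho /\ rho <= tau /\ tau + rho < size uw.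
  case: (leqP (i + rho) pp) => H1.
    exists i; split; [exact: weq_sym (weq_A H1) | lia].
  case: (ltnP (pp + rho) i) => H2.
    exists i.-1; split; last lia.
    have := weq_sym (@weq_B i.-1 rho ltac:(lia) ltac:(lia)).
    by have -> : i.-1.+1 = i by lia.
  exists (i + q0 - pp); split; last (rewrite /NN in Hqs; lia).
  apply: weq_C; rewrite /NN; lia.
have [t [/andP [T3 T4] W']] := @avail_u NN (2 * c + 2) rho tau lo T1 T2 R3 ltac:(rewrite -/uw -/PN; lia).
move: T4; rewrite -/PN => T4.
exists t; split; first (rewrite /Lam; apply/andP; split; lia).
exact: weq_trans W W'.
Qed.
End Conc.

Set Bullet Behavior "Strict Subproofs".

Lemma not_FO2 : ~ FO2Inv_definable L.
Proof.
move=> [f [_ Hf]].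
set K := depth f.
set rmax := rr K. set m := rmax.+1.
have Hm : rmax < m by rewrite /m.
set Lm := Lam m.
set Dl := Lm + 10.
set E := DD Dl K + rr K + Lm + 10.
set c := E.
have HPN : PN m = 8 * m + 2 := PN_eq Hm.
have Hsu : size (uw m c) = (2 * c + 2) * PN m := size_uw m c.
have Hsv : size (vw m c) = (size (uw m c)).+1 := size_vw c Hm.
have Hpp := pp_lt c Hm.
have Epp : pp m c = c * PN m + 3 * NN m + 2 by [].
have HNN : NN m = 2 * m by [].
have HcP : c <= c * PN m by rewrite HPN; nia.
have c3 : 3 * E <= size (uw m c) by rewrite Hsu HPN /c; nia.
have c3' : 3 * E <= size (vw m c) by rewrite Hsv; lia.
have Hpre : forall t, t < E -> letter_at (uw m c) t = letter_at (vw m c) t.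
  move=> t Ht; symmetry; apply: (v_lt Hm); rewrite Epp; lia.
have Hsuf : forall t, t < E ->
    letter_at (uw m c) (size (uw m c) - t.+1) = letter_at (vw m c) (size (vw m c) - t.+1).
  move=> t Ht; rewrite (v_gt Hm); last first.
    rewrite Hsv Hsu Epp HNN HPN; rewrite HPN in HcP; nia.
  congr letter_at; lia.
have := EF_final (w1 := uw m c) (w2 := vw m c) (K := K) (Dl := Dl) (Lam := Lm) (E := E) (rmax := rmax)
  ltac:(rewrite /Dl; lia) ltac:(by []) c3 c3' (leqnn _) Hpre Hsuf
  (@Notrip_uu _ _) (@Notrip_vw m c rmax Hm) (fun rho i lo => @Hav_uv m c rmax Hm rho i lo)
  (fun rho i lo => @Hav_vu m c rmax Hm rho i lo) (f := f) (leqnn _).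
rewrite -Hf -Hf => HL.
have Lu : L (uw m c) by exact: L_uu.
have := L_even (proj1 HL Lu).
rewrite Hsv Hsu (_ : (2 * c + 2) * PN m = ((c + 1) * PN m).*2); last by rewrite -mul2n; nia.
by rewrite /= odd_double.
Qed.

Theorem corollary7 : FO_definable L /\ ~ FO2Inv_definable L.
Proof. split; [exact: FO_part | exact: not_FO2]. Qed.
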